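(* Let $X$ be a pointed manifold, $f:X\to\mathbb{R}$ a Morse function, $\{m_{x,y}\in C_{|x|-|y|-1}(\Omega X),\ x,y\in\mathrm{Crit}(f)\}$ a twisting cocycle and $(\mathcal{A},\{\nu_n\})$ an $\mathcal{A}_\infty$-module over $C_*(\Omega X)$. Then $\partial=\sum_{n\ge0}(\nu_{n+1}\otimes1)\tilde{\mathbf m}^n$ is a differential (of degree $-1$, with $\partial^2=0$) on $C_*(X,m_{x,y},\mathcal{A})=\mathcal{A}\otimes\mathbb{Z}\mathrm{Crit}(f)$.
   Context: $C_*(\Omega X)$: normalized cubical chains on Moore loops based at the basepoint, an $\mathcal{A}_\infty$-algebra with $\mu_1$ = differential, $\mu_2$ = Pontryagin product, $\mu_i=0$ for $i\ge3$. Koszul sign rule: $(f\otimes g)(x\otimes y)=(-1)^{|g||x|}f(x)\otimes g(y)$. A twisting cocycle satisfies $\partial m_{x,y}=\sum_z(-1)^{|x|-|z|}m_{x,z}m_{z,y}$. An $\mathcal{A}_\infty$-module over $C_*(\Omega X)$ is a graded $\mathbb{Z}$-module $\mathcal{A}$ with maps $\nu_n:\mathcal{A}\otimes C_*(\Omega X)^{\otimes n-1}\to\mathcal{A}$ of degree $n-2$ ($\nu_1$ a differential) satisfying, for all $N\ge1$, $\sum_{s+t=N,s\ge1}(-1)^{st}\nu_{t+1}(\nu_s\otimes1^{\otimes t})+\sum_{r+s+t=N,r,s\ge1}(-1)^{r+st}\nu_{r+t+1}(1^{\otimes r}\otimes\mu_s\otimes1^{\otimes t})=0$. With $\mathbf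 m(x)=\sum_y m_{x,y}\otimes y$, $\tilde{\mathbf m}$ is the degree $-1$ endomorphism of $\mathcal{A}\otimes TC_*(\Omega X)\otimes\mathbb{Z}\mathrm{Crit}(f)$ (where $TC_*(\Omega X)=\bigoplus_{i\ge0}C_*(\Omega X)^{\otimes i}$) given by $\tilde{\mathbf m}(\alpha\otimes\gamma_1\otimes\cdots\otimes\gamma_k\otimes x)=(1^{\otimes k+1}\otimes\mathbf m)(\alpha\otimes\gamma_1\otimes\cdots\otimes\gamma_k\otimes x)$. *)

(* Defs.v *)
From HB Require Import structures.
From mathcomp Require Import all_boot all_order all_algebra.
Set Implicit Arguments. Unset Strict Implicit. Unset Printing Implicit Defensive.
Import Order.TTheory GRing.Theory Num.Theory.
Local Open Scope ring_scope.

Definition ksign (e : int) : int := (-1) ^+ `|e|%N.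

Section Graded.
Variable M : zmodType.

(* hom k x  <->  x is homogeneous of degree k.  A grading of M is a
   direct-sum decomposition M = (+)_k M_k into subgroups. *)
Definition is_grading (hom : int -> M -> Prop) : Prop :=
  [/\ forall k, hom k 0,
      forall k x y, hom k x -> hom k y -> hom k (x - y),
      forall k l x, hom k x -> hom l x -> k <> l -> x = 0
    & forall x, exists s : seq (int * M),
        (forall kx, kx \in s -> hom kx.1 kx.2) /\ x = \sum_(kx <- s) kx.2].

Definition nonneg_grading (hom : int -> M -> Prop) : Prop :=
  forall k x, k < 0 -> hom k x -> x = 0.

Definition hom_seq (hom : int -> M -> Prop) (cs : seq M) (qs : seq int) : Prop :=
  size cs = size qs /\ forall i, (i < size cs)%N -> hom (nth 0 qs i) (nth 0 cs i).
End Graded.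

Section Ainf.
Variables (C A : zmodType).

(* the A_oo operations of a dga: mu_1 = d, mu_2 = pr, mu_i = 0 for i >= 3;
   mu cs = mu_{size cs}(c_1 (x) ... (x) c_s) *)
Definition mu_of (d : C -> C) (pr : C -> C -> C) (cs : seq C) : C :=
  match cs with
  | [:: c] => d c
  | [:: c1; c2] => pr c1 c2
  | _ => 0
  end.

Definition additive_fun (f : C -> C) : Prop := forall x y, f (x + y) = f x + f y.
Definition biadditive_fun (f : C -> C -> C) : Prop :=
  (forall x x' y, f (x + x') y = f x y + f x' y) /\
  (forall x y y', f x (y + y') = f x y + f x y').

(* nu a cs = nu_n(a (x) c_1 (x) ... (x) c_{n-1}) with n = size cs + 1 *)
Definition multiadditive (nu : A -> seq C -> A) : Prop :=
  (forall a a' cs, nu (a + a') cs = nu a cs + nu a' cs) /\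
  (forall a cs i c c', (i < size cs)%N ->
     nu a (set_nth 0 cs i (c + c')) = nu a (set_nth 0 cs i c) + nu a (set_nth 0 cs i c')).

(* nu_n has degree n - 2 *)
Definition nu_graded (hA : int -> A -> Prop) (hC : int -> C -> Prop)
  (nu : A -> seq C -> A) : Prop :=
  forall a p cs qs, hA p a -> hom_seq hC cs qs ->
    hA (p + \sum_(q <- qs) q + (size cs)%:Z - 1) (nu a cs).

(* A_oo-algebra relations, evaluated on homogeneous inputs with Koszul signs:
   sum_{r+s+t=N, s>=1} (-1)^{r+st} mu_{r+1+t}(1^r (x) mu_s (x) 1^t) = 0 *)
Definition ainf_alg_rel (hC : int -> C -> Prop) (mu : seq C -> C) : Prop :=
  forall cs qs, hom_seq hC cs qs ->
    let N := size cs in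
    \sum_(r < N.+1) \sum_(s < N.+1 | (1 <= s)%N && (r + s <= N)%N)
       mu (take r cs ++ mu (take s (drop r cs)) :: drop (r + s) cs)
       *~ (ksign (Posz (r + s * (N - r - s))%N)
           * ksign (((Posz s) - 2) * \sum_(q <- take r qs) q)) = 0.

(* A_oo-module relations (as in the paper), evaluated on homogeneous inputs
   a (x) c_1 (x) ... (x) c_{N-1}, with Koszul signs *)
Definition ainf_mod_rel (hA : int -> A -> Prop) (hC : int -> C -> Prop)
  (nu : A -> seq C -> A) (mu : seq C -> C) : Prop :=
  forall a p cs qs, hA p a -> hom_seq hC cs qs ->
    let N := (size cs).+1 in
    \sum_(s < N.+1 | (1 <= s)%N)
       nu (nu a (take s.-1 cs)) (drop s.-1 cs) *~ ksign (Posz (s * (N - s))%N)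
    + \sum_(r < N.+1) \sum_(s < N.+1 | [&& (1 <= r)%N, (1 <= s)%N & (r + s <= N)%N])
       nu a (take r.-1 cs ++ mu (take s (drop r.-1 cs)) :: drop (r.-1 + s) cs)
       *~ (ksign (Posz (r + s * (N - r - s))%N)
           * ksign (((Posz s) - 2) * (p + \sum_(q <- take r.-1 qs) q)))
    = 0.
End Ainf.

Section Twisted.
Variables (C A : zmodType) (Crit : finType) (ind : Crit -> nat).

Definition twisting_cocycle (hC : int -> C -> Prop) (d : C -> C)
  (pr : C -> C -> C) (m : Crit -> Crit -> C) : Prop :=
  (forall x y, hC ((ind x)%:Z - (ind y)%:Z - 1) (m x y)) /\
  (forall x y, d (m x y) =
     \sum_(z : Crit) pr (m x z) (m z y) *~ ksign ((ind x)%:Z - (ind z)%:Z)).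

(* a signed pure tensor  alpha (x) gamma_1 (x) ... (x) gamma_k (x) x  in
   A (x) TC (x) Z Crit, together with the degree |alpha| + sum |gamma_i| *)
Record mterm := MTerm { mt_a : A; mt_gs : seq C; mt_x : Crit; mt_deg : int }.

Variable m : Crit -> Crit -> C.

Definition mtil_step (t : mterm) : seq mterm :=
  [seq MTerm (mt_a t *~ ksign (mt_deg t)) (rcons (mt_gs t) (m (mt_x t) y)) y
           (mt_deg t + ((ind (mt_x t))%:Z - (ind y)%:Z - 1)) | y <- enum Crit].

Definition mtil_pow (n : nat) (ts : seq mterm) : seq mterm :=
  iter n (fun ts => flatten (map mtil_step ts)) ts.

(* Elements of A (x) Z Crit are functions v : Crit -> A (v = sum_x v x (x) x);
   v is homogeneous of degree k iff v x in A_{k - |x|}.  The differential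
   partial = sum_{n >= 0} (nu_{n+1} (x) 1) m~^n, applied to a homogeneous v of
   degree k, truncated to n < Nb (for Nb >= #|Crit| all further terms vanish). *)
Definition twisted_diff (nu : A -> seq C -> A) (Nb : nat) (k : int)
  (v : Crit -> A) : Crit -> A :=
  fun y => \sum_(x : Crit) \sum_(n < Nb)
     \sum_(t <- mtil_pow n [:: MTerm (v x) [::] x (k - (ind x)%:Z)] | mt_x t == y)
        nu (mt_a t) (mt_gs t).
End Twisted.

(* Main.v *)
Require Import Defs.
From HB Require Import structures.
From mathcomp Require Import all_boot all_order all_algebra.
From mathcomp Require Import ring lra zify.
Import Order.TTheory GRing.Theory Num.Theory.
Local Open Scope ring_scope.
Set Implicit Arguments. Unset Strict Implicit. Unset Printing Implicit Defensive.
Lemma ksignE e : ksign e = (-1) ^ e.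
Proof. by case: e => n //=. Qed.

Lemma ksignD a b : ksign (a + b) = ksign a * ksign b.
Proof. by rewrite !ksignE exprzDr // unitrN1. Qed.

Lemma ksignN a : ksign (- a) = ksign a.
Proof. by rewrite !ksignE -exprz_inv invrN1. Qed.

Lemma ksignB a b : ksign (a - b) = ksign a * ksign b.
Proof. by rewrite ksignD ksignN. Qed.
Lemma ksign_sq a : ksign a * ksign a = 1.
Proof. by rewrite -ksignB subrr. Qed.
Lemma ksign_pm a : ksign a = 1 \/ ksign a = -1.
Proof. rewrite /ksign -signr_odd; case: odd; by [right|left]. Qed.

Lemma ksign_even a b t : a = b + (t + t) -> ksign a = ksign b.
Proof. by move=> ->; rewrite [ksign (b + _)]ksignD [ksign (t + t)]ksignD ksign_sq mulr1. Qed.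

Lemma ksign_opp f : - ksign f = ksign (1 + f).
Proof. by rewrite ksignD mulN1r. Qed.

Lemma ksign_2n a b : ksign (Posz (a + 2 * b)%N) = ksign (Posz a).
Proof. by rewrite PoszD ksignD PoszM (_ : Posz 2 = 1 + 1) // mulrDl mul1r ksignD ksign_sq mulr1. Qed.

Section Addf.
Variables (V W : zmodType) (f : V -> W).
Hypothesis fD : forall a b, f (a + b) = f a + f b.
Lemma addf0 : f 0 = 0.
Proof. by apply: (@addrI _ (f 0)); rewrite -fD !addr0. Qed.
Lemma addfN a : f (- a) = - f a.
Proof. by apply: (@addrI _ (f a)); rewrite -fD !subrr addf0. Qed.
Lemma addfMn a n : f (a *+ n) = f a *+ n.
Proof. by elim: n => [|n IH]; rewrite ?mulr0n ?addf0 // !mulrS fD IH. Qed.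
Lemma addfz a z : f (a *~ z) = f a *~ z.
Proof. case: z => n; first by rewrite -!pmulrn addfMn.
by rewrite !NegzE !mulrNz addfN -!pmulrn addfMn. Qed.
Lemma addf_sum I (r : seq I) (P : pred I) F :
  f (\sum_(i <- r | P i) F i) = \sum_(i <- r | P i) f (F i).
Proof. exact: (big_morph f fD addf0). Qed.
End Addf.

Lemma sum_bound (V : zmodType) (g : nat -> V) K0 B1 B2 :
  (forall n, (K0 <= n)%N -> g n = 0) -> (K0 <= B1)%N -> (K0 <= B2)%N ->
  \sum_(n < B1) g n = \sum_(n < B2) g n.
Proof.
move=> H h1 h2.
have E : forall B, (K0 <= B)%N -> \sum_(n < B) g n = \sum_(n < K0) g n.
  move=> B hB; rewrite [RHS](big_ord_widen _ _ hB) [RHS]big_mkcond /=.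
  apply: eq_bigr => i _; case: ifP => // /negbT; rewrite -leqNgt => /H ->//.
by rewrite !E.
Qed.

Lemma tri_sum (V : zmodType) (f : nat -> nat -> V) K :
  \sum_(n < K) \sum_(n' < (K - n)%N) f n n' = \sum_(L < K) \sum_(n < L.+1) f n (L - n)%N.
Proof.
elim: K => [|K IH]; first by rewrite !big_ord0.
rewrite [RHS]big_ord_recr /= -IH [LHS]big_ord_recr /= subSnn big_ord1 /=.
have -> : \sum_(i < K) \sum_(n' < (K.+1 - i)%N) f i n' =
   \sum_(i < K) (\sum_(n' < (K - i)%N) f i n' + f i (K - i)%N).
  apply: eq_bigr => i _; rewrite subSn; last exact: ltnW (ltn_ord i).
  by rewrite big_ord_recr.
rewrite big_split /= -addrA; congr (_ + _).
by rewrite [RHS]big_ord_recr /= subnn.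
Qed.
Lemma second_split (V : zmodType) L (R : nat -> nat -> V) :
  (forall r s, (1 <= r)%N -> (3 <= s)%N -> (r + s <= L.+1)%N -> R r s = 0) ->
  \sum_(r < L.+2) \sum_(s < L.+2 | [&& (1 <= r)%N, (1 <= s)%N & (r + s <= L.+1)%N]) R r s =
  \sum_(i < L) R i.+1 1%N + \sum_(i < L) (if (i.+2 <= L)%N then R i.+1 2%N else 0).
Proof.
move=> HR.
pose g (r s : nat) := if [&& (1 <= r)%N, (1 <= s)%N & (r + s <= L.+1)%N] then R r s else 0.
have Eg : forall r : 'I_L.+2, \sum_(s < L.+2 | [&& (1 <= r)%N, (1 <= s)%N & (r + s <= L.+1)%N]) R r s =
   (if (1 <= r)%N && (r + 1 <= L.+1)%N then R r 1%N else 0) +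
   (if (1 <= r)%N && (r + 2 <= L.+1)%N then R r 2%N else 0).
  move=> r; rewrite big_mkcond /=.
  rewrite (@sum_bound _ (g r) (minn 3 L.+2) L.+2 3); last by rewrite geq_minl.
  - by rewrite !big_ord_recl big_ord0 /g /= andbF add0r addr0.
  - move=> s hs; rewrite /g; case: ifP => // /and3P [h1 h2 h3].
    apply: HR => //; move: hs h3; rewrite geq_min; case/orP => //; lia.
  - by rewrite geq_minr.
rewrite (eq_bigr _ (fun r _ => Eg r)) big_split /=; congr (_ + _).
  rewrite big_ord_recl /= add0r big_ord_recr /= addn1 ltnn addr0.
  by apply: eq_bigr => i _; rewrite /bump /= addn1 ltnS (ltn_ord i).
rewrite big_ord_recl /= add0r big_ord_recr /= /bump /= [X in _ + X]ifF ?addr0; last by rewrite add1n addn2 ltnNge leqnSn.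
by apply: eq_bigr => i _; rewrite !add1n addn2.
Qed.

Section Psum.
Variables (T : finType) (V : zmodType).

Fixpoint psum (n : nat) (F : seq T -> V) : V :=
  if n is n'.+1 then \sum_(y : T) psum n' (fun ys => F (y :: ys)) else F [::].

Lemma psum_eq n F G : (forall ys, size ys = n -> F ys = G ys) -> psum n F = psum n G.
Proof.
elim: n F G => [|n IH] F G H /=; first exact: H.
apply: eq_bigr => y _; apply: IH => ys Hs; apply: H; by rewrite /= Hs.
Qed.

Lemma psum_sum n I (r : seq I) (P : pred I) (F : I -> seq T -> V) :
  psum n (fun ys => \sum_(i <- r | P i) F i ys) = \sum_(i <- r | P i) psum n (F i).
Proof.
elim: n F => [|n IH] F //=.
under eq_bigr => y _ do rewrite (IH (fun i ys => F i (y :: ys))).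
by rewrite exchange_big.
Qed.

Lemma psum0 n : psum n (fun _ => 0) = 0.
Proof. elim: n => [|n IH] //=; by rewrite big1. Qed.

Lemma psumD n F G : psum n (fun ys => F ys + G ys) = psum n F + psum n G.
Proof.
have := psum_sum n [:: true; false] predT (fun b ys => if b then F ys else G ys).
rewrite !big_cons !big_nil /= addr0 => <-.
by apply: psum_eq => ys _; rewrite !big_cons big_nil addr0.
Qed.

Lemma psum_cat a b F :
  psum (a + b) F = psum a (fun u => psum b (fun w => F (u ++ w))).
Proof.
elim: a F => [|a IH] F //=.
by apply: eq_bigr => y _; rewrite IH.
Qed.

Lemma psum_swap n n' (H : seq T -> seq T -> V) :
  psum n (fun ys => psum n' (fun ys' => H ys ys')) =
  psum n' (fun ys' => psum n (fun ys => H ys ys')).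
Proof.
elim: n H => [|n IH] H //=.
under eq_bigr => y _ do rewrite (IH (fun ys ys' => H (y :: ys) ys')).
by rewrite -psum_sum.
Qed.
Lemma psum_split n L F : (n <= L)%N ->
  psum L F = psum n (fun u => psum (L - n) (fun w => F (u ++ w))).
Proof. by move=> h; rewrite -psum_cat subnKC. Qed.

Lemma psumS n F : psum n.+1 F = \sum_(y : T) psum n (fun ys => F (y :: ys)).
Proof. by []. Qed.
End Psum.

Lemma psum_morph (T : finType) (V W : zmodType) (f : V -> W) n (F : seq T -> V) :
  (forall a b, f (a + b) = f a + f b) -> f 0 = 0 ->
  f (psum n F) = psum n (fun ys => f (F ys)).
Proof.
move=> fD f0; elim: n F => [|n IH] F //=.
rewrite (big_morph f fD f0); apply: eq_bigr => y _; exact: IH.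
Qed.


Section Main.
Variables (C A : zmodType) (hC : int -> C -> Prop) (hA : int -> A -> Prop)
  (d : C -> C) (pr : C -> C -> C)
  (Crit : finType) (ind : Crit -> nat) (m : Crit -> Crit -> C)
  (nu : A -> seq C -> A).

Fixpoint gam (x : Crit) (ys : seq Crit) : seq C :=
  if ys is y :: ys' then m x y :: gam y ys' else [::].
Fixpoint sgp (e : int) (x : Crit) (ys : seq Crit) : int :=
  if ys is y :: ys' then ksign e * sgp (e + ((ind x)%:Z - (ind y)%:Z - 1)) y ys' else 1.
Fixpoint qsp (x : Crit) (ys : seq Crit) : seq int :=
  if ys is y :: ys' then ((ind x)%:Z - (ind y)%:Z - 1) :: qsp y ys' else [::].

Lemma mtil_powS n (ts : seq (mterm C A Crit)) :
  mtil_pow ind m n.+1 ts = mtil_pow ind m n (flatten (map (mtil_step ind m) ts)).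
Proof. exact: iterSr. Qed.

Lemma mtil_pow_cat n ts (G : mterm C A Crit -> A) :
  \sum_(t <- mtil_pow ind m n ts) G t =
  \sum_(t0 <- ts) \sum_(t <- mtil_pow ind m n [:: t0]) G t.
Proof.
elim: n ts G => [|n IH] ts G.
  by rewrite /mtil_pow /=; apply: eq_bigr => t _; rewrite big_seq1.
rewrite mtil_powS IH big_flatten big_map.
apply: eq_bigr => t0 _.
by rewrite mtil_powS IH big_flatten big_map big_seq1.
Qed.

Lemma mtil_psum n a gs x e (F : A -> seq C -> Crit -> A) :
  \sum_(t <- mtil_pow ind m n [:: MTerm a gs x e]) F (mt_a t) (mt_gs t) (mt_x t) =
  psum n (fun ys => F (a *~ sgp e x ys) (gs ++ gam x ys) (last x ys)).
Proof.
elim: n a gs x e => [|n IH] a gs x e.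
  by rewrite /mtil_pow /= big_seq1 /= cats0.
rewrite mtil_powS mtil_pow_cat /= cats0 /mtil_step big_map.
rewrite big_enum /=; apply: eq_bigr => y _.
rewrite IH; apply: psum_eq => ys _.
by rewrite mulrzA cat_rcons.
Qed.

Lemma size_gam x ys : size (gam x ys) = size ys.
Proof. by elim: ys x => [|y ys IH] x //=; rewrite IH. Qed.

Lemma gam_cat x u w : gam x (u ++ w) = gam x u ++ gam (last x u) w.
Proof. by elim: u x => [|y u IH] x //=; rewrite IH. Qed.

Lemma sgp_shift e f x ys : sgp (e + f) x ys = sgp e x ys * ksign (f * (size ys)%:Z).
Proof.
elim: ys e x => [|y ys IH] e x /=; first by rewrite mulr0 mulr1.
rewrite -addrA [f + _]addrC addrA IH ksignD intS mulrDr mulr1 ksignD; ring.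
Qed.

Lemma sgp_cat e x u w : sgp e x (u ++ w) =
  sgp e x u * sgp (e + ((ind x)%:Z - (ind (last x u))%:Z - (size u)%:Z)) (last x u) w.
Proof.
elim: u e x => [|y u IH] e x /=; first by rewrite mul1r subrr subr0 ?addr0.
rewrite IH mulrA; congr (_ * sgp _ _ _).
rewrite intS; ring.
Qed.

Lemma size_qsp x ys : size (qsp x ys) = size ys.
Proof. by elim: ys x => [|y ys IH] x //=; rewrite IH. Qed.

Lemma qsp_cat x u w : qsp x (u ++ w) = qsp x u ++ qsp (last x u) w.
Proof. by elim: u x => [|y u IH] x //=; rewrite IH. Qed.

Lemma sum_qsp x ys : \sum_(q <- qsp x ys) q = (ind x)%:Z - (ind (last x ys))%:Z - (size ys)%:Z.
Proof.
elim: ys x => [|y ys IH] x /=; first by rewrite big_nil subrr subr0.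
rewrite big_cons IH intS; ring.
Qed.


Fixpoint phi (e : int) (x : Crit) (ys : seq Crit) : int :=
  if ys is y :: ys' then e + phi (e + ((ind x)%:Z - (ind y)%:Z - 1)) y ys' else 0.

Lemma sgpE e x ys : sgp e x ys = ksign (phi e x ys).
Proof. by elim: ys e x => [|y ys IH] e x //=; rewrite IH ksignD. Qed.

Lemma phi_shift e f x ys : phi (e + f) x ys = phi e x ys + f * (size ys)%:Z.
Proof.
elim: ys e x => [|y ys IH] e x /=; first by rewrite mulr0 addr0.
rewrite (_ : e + f + ((ind x)%:Z - (ind y)%:Z - 1) = e + ((ind x)%:Z - (ind y)%:Z - 1) + f); last by ring.
rewrite IH intS; ring.
Qed.

Lemma phi_cat e x u w : phi e x (u ++ w) =
  phi e x u + phi (e + ((ind x)%:Z - (ind (last x u))%:Z - (size u)%:Z)) (last x u) w.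
Proof.
elim: u e x => [|y u IH] e x /=; first by rewrite subrr subr0 ?addr0 add0r.
rewrite IH addrA; congr (_ + phi _ _ _).
rewrite intS; ring.
Qed.

Hypothesis hCnn : nonneg_grading hC.
Hypothesis hm : forall x y, hC ((ind x)%:Z - (ind y)%:Z - 1) (m x y).
Hypothesis nuA : forall a a' cs, nu (a + a') cs = nu a cs + nu a' cs.
Hypothesis nuE : forall a cs i c c', (i < size cs)%N ->
     nu a (set_nth 0 cs i (c + c')) = nu a (set_nth 0 cs i c) + nu a (set_nth 0 cs i c').

Lemma m0 x y : ~~ (ind y < ind x)%N -> m x y = 0.
Proof.
move=> H; apply: (hCnn (k := (ind x)%:Z - (ind y)%:Z - 1)); last exact: hm.
rewrite -leqNgt in H.
have : (ind x)%:Z <= (ind y)%:Z by rewrite lez_nat.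
move=> h; lra.
Qed.

Definition decr x zs := path (fun a b => (ind b < ind a)%N) x zs.

Lemma decr_size x zs : decr x zs -> (size zs < #|Crit|)%N.
Proof.
move=> H.
have U : uniq (x :: zs).
  apply: (@sorted_uniq _ (fun a b => (ind b < ind a)%N)).
  - by move=> a b c /= h1 h2; apply: ltn_trans h2 h1.
  - by move=> a /=; rewrite ltnn.
  - exact: H.
have M := max_card (mem (x :: zs)).
by rewrite (card_uniqP U) in M.
Qed.

Lemma gam_0 x zs : ~~ decr x zs -> 0 \in gam x zs.
Proof.
elim: zs x => [|y zs IH] x //=.
rewrite negb_and => /orP [H|H]; first by rewrite m0 // mem_head.
by rewrite in_cons IH // orbT.
Qed.

Lemma set_nth_cat0 (s1 s2 : seq C) c0 c : set_nth 0 (s1 ++ c0 :: s2) (size s1) c = s1 ++ c :: s2.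
Proof. by elim: s1 => [|x s1 IH] //=; rewrite IH. Qed.

Lemma nu_entryD a s1 s2 c c' :
  nu a (s1 ++ (c + c') :: s2) = nu a (s1 ++ c :: s2) + nu a (s1 ++ c' :: s2).
Proof.
rewrite -(set_nth_cat0 s1 s2 0 (c + c')) -(set_nth_cat0 s1 s2 0 c) -(set_nth_cat0 s1 s2 0 c').
by rewrite nuE // size_cat /= -[X in (X < _)%N]addn0 ltn_add2l.
Qed.

Lemma nu_0in a cs : 0 \in cs -> nu a cs = 0.
Proof.
case/splitPr => s1 s2.
have H := nu_entryD a s1 s2 0 0; rewrite addr0 in H.
by apply: (@addrI _ (nu a (s1 ++ 0 :: s2))); rewrite addr0 -H.
Qed.


Lemma nuz a cs z : nu (a *~ z) cs = nu a cs *~ z.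
Proof. exact: (addfz (f := fun a => nu a cs)). Qed.
Lemma nu0 cs : nu 0 cs = 0.
Proof. exact: (addf0 (f := fun a => nu a cs)). Qed.
Lemma nu_sum I (r : seq I) (P : pred I) F cs :
  nu (\sum_(i <- r | P i) F i) cs = \sum_(i <- r | P i) nu (F i) cs.
Proof. exact: (addf_sum (f := fun a => nu a cs)). Qed.

Hypothesis hAg : is_grading hA.
Hypothesis nug : nu_graded hA hC nu.

Lemma hA0 j : hA j 0.
Proof. by case: hAg. Qed.
Lemma hAB j a b : hA j a -> hA j b -> hA j (a - b).
Proof. by case: hAg => _ H _ _; apply: H. Qed.
Lemma hAN j a : hA j a -> hA j (- a).
Proof. by move=> h; rewrite -sub0r; apply: hAB => //; apply: hA0. Qed.
Lemma hAD j a b : hA j a -> hA j b -> hA j (a + b).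
Proof. by move=> h1 h2; rewrite -[b]opprK; apply: hAB => //; apply: hAN. Qed.
Lemma hA_sum j I (r : seq I) (P : pred I) F :
  (forall i, P i -> hA j (F i)) -> hA j (\sum_(i <- r | P i) F i).
Proof.
move=> H; elim/big_rec: _ => [|i b Pi hb]; first exact: hA0.
by apply: hAD => //; apply: H.
Qed.
Lemma hAz j a z : hA j a -> hA j (a *~ z).
Proof.
move=> h; have hn : forall n, hA j (a *+ n).
  elim=> [|n IH]; first by rewrite mulr0n; apply: hA0.
  by rewrite mulrS; apply: hAD.
by case: z => n; [rewrite -pmulrn | rewrite NegzE mulrNz -pmulrn; apply: hAN].
Qed.
Lemma hA_psum j n (F : seq Crit -> A) : (forall ys, size ys = n -> hA j (F ys)) -> hA j (psum n F).
Proof.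
elim: n F => [|n IH] F H /=; first exact: H.
apply: hA_sum => z _; apply: IH => ys Hs; apply: H; by rewrite /= Hs.
Qed.

Lemma hom_gam x ys : hom_seq hC (gam x ys) (qsp x ys).
Proof.
split; first by rewrite size_gam size_qsp.
elim: ys x => [|z ys IH] x i //= hi.
case: i hi => [|i] hi /=; first exact: hm.
exact: IH.
Qed.

Lemma td_psum Nb k v y : twisted_diff ind m nu Nb k v y =
  \sum_(x : Crit) \sum_(n < Nb) psum n (fun ys =>
     if last x ys == y then nu (v x *~ ksign (phi (k - (ind x)%:Z) x ys)) (gam x ys) else 0).
Proof.
apply: eq_bigr => x _; apply: eq_bigr => n _.
rewrite big_mkcond.
rewrite (mtil_psum n (v x) [::] x (k - (ind x)%:Z) (fun a gs x' => if x' == y then nu a gs else 0)).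
by apply: psum_eq => ys _; rewrite sgpE.
Qed.

Lemma td_deg Nb k v y : (forall x, hA (k - (ind x)%:Z) (v x)) ->
  hA (k - 1 - (ind y)%:Z) (twisted_diff ind m nu Nb k v y).
Proof.
move=> hv; rewrite td_psum.
apply: hA_sum => x _; apply: hA_sum => n _; apply: hA_psum => ys Hs.
case: eqP => [<-|_]; last exact: hA0.
have := nug (hAz (ksign (phi (k - (ind x)%:Z) x ys)) (hv x)) (hom_gam x ys).
rewrite sum_qsp size_gam => h.
have E : k - 1 - (ind (last x ys))%:Z = k - (ind x)%:Z +
   ((ind x)%:Z - (ind (last x ys))%:Z - (size ys)%:Z) + (size ys)%:Z - 1 by ring.
by rewrite E.
Qed.

Definition F1 k (v : Crit -> A) y x n n' := psum n (fun ys => psum n' (fun ys' =>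
  if last (last x ys) ys' == y then
    nu (nu (v x) (gam x ys) *~ ksign (phi (k - (ind x)%:Z) x ys +
          phi (k - 1 - (ind (last x ys))%:Z) (last x ys) ys')) (gam (last x ys) ys')
  else 0)).

Lemma big_if_last (V : zmodType) (l : Crit) (G : Crit -> V) :
  \sum_(x' : Crit) (if l == x' then G x' else 0) = G l.
Proof.
rewrite -big_mkcond (big_pred1 l) // => x'; by rewrite /= eq_sym.
Qed.

Lemma dd_expand Nb k v y :
  twisted_diff ind m nu Nb (k - 1) (twisted_diff ind m nu Nb k v) y =
  \sum_(x : Crit) \sum_(n < Nb) \sum_(n' < Nb) F1 k v y x n n'.
Proof.
rewrite td_psum.
pose G x' ys' x ys := if last x' ys' == y then nu ((if last x ys == x' then
   nu (v x *~ ksign (phi (k - (ind x)%:Z) x ys)) (gam x ys) else 0)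
   *~ ksign (phi (k - 1 - (ind x')%:Z) x' ys')) (gam x' ys') else 0.
transitivity (\sum_(x' : Crit) \sum_(n' < Nb) psum n' (fun ys' =>
   \sum_(x : Crit) \sum_(n < Nb) psum n (fun ys => G x' ys' x ys))).
  apply: eq_bigr => x' _; apply: eq_bigr => n' _.
  rewrite (td_psum Nb k v x').
  apply: psum_eq => ys' _.
  rewrite /G; case: (last x' ys' == y).
    rewrite mulrz_suml nu_sum; apply: eq_bigr => x _.
    rewrite mulrz_suml nu_sum; apply: eq_bigr => n _.
    rewrite (psum_morph (f := fun a => a *~ _)); last by rewrite mul0rz.
      by rewrite (psum_morph (f := fun a => nu a _)) //; apply: nu0.
    by move=> a b; rewrite mulrzDl.
  rewrite big1 // => x _; rewrite big1 // => n _.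
  exact: psum0.
under eq_bigr => x' _ do under eq_bigr => n' _ do rewrite psum_sum.
under eq_bigr => x' _ do under eq_bigr => n' _ do under eq_bigr => x _ do rewrite psum_sum.
under eq_bigr => x' _ do rewrite exchange_big.
rewrite exchange_big; apply: eq_bigr => x _.
under eq_bigr => x' _ do rewrite exchange_big.
rewrite exchange_big; apply: eq_bigr => n _.
rewrite exchange_big; apply: eq_bigr => n' _.
under eq_bigr => x' _ do rewrite psum_swap.
symmetry.
transitivity (psum n (fun ys => psum n' (fun ys' => \sum_(x' : Crit) G x' ys' x ys))).
  apply: psum_eq => ys _; apply: psum_eq => ys' _.
  rewrite /G (bigD1 (last x ys)) //= eqxx big1 ?addr0.
    case: ifP => // _; by rewrite [nu (v x *~ _) _]nuz -mulrzA ksignD.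
  move=> x' /negbTE; rewrite eq_sym => ->; rewrite mul0rz nu0; by case: ifP.
transitivity (psum n (fun ys => \sum_(x' : Crit) psum n' (fun ys' => G x' ys' x ys))).
  by apply: psum_eq => ys _; rewrite psum_sum.
by rewrite psum_sum.
Qed.

Lemma F1_van k v y x n n' : (#|Crit| <= n + n')%N -> F1 k v y x n n' = 0.
Proof.
move=> hK; rewrite /F1 -[RHS](@psum0 Crit A n); apply: psum_eq => ys Hs.
rewrite -[RHS](@psum0 Crit A n'); apply: psum_eq => ys' Hs'.
case: ifP => // _.
have : ~~ decr x (ys ++ ys').
  apply/negP => /decr_size; rewrite size_cat Hs Hs' ltnNge hK //.
rewrite /decr cat_path negb_and => /orP [h|h].
  by rewrite (nu_0in _ (gam_0 h)) mul0rz nu0.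
exact: (nu_0in _ (gam_0 h)).
Qed.

Lemma dd_tri Nb k v y x : (#|Crit| <= Nb)%N ->
  \sum_(n < Nb) \sum_(n' < Nb) F1 k v y x n n' =
  \sum_(L < #|Crit|.+1) \sum_(n < L.+1) F1 k v y x n (L - n)%N.
Proof.
move=> hNb; rewrite -tri_sum.
transitivity (\sum_(n < Nb) \sum_(n' < (#|Crit|.+1 - n)%N) F1 k v y x n n').
  apply: eq_bigr => n _; apply: (@sum_bound _ _ (#|Crit| - n)%N).
  - move=> n' h; apply: F1_van; lia.
  - lia.
  - lia.
apply: (@sum_bound _ (fun n => \sum_(n' < (#|Crit|.+1 - n)%N) F1 k v y x n n') #|Crit|) => //.
by move=> n h; apply: big1 => n' _; apply: F1_van; lia.
Qed.

Lemma if_sum (V : zmodType) I (r : seq I) (P : pred I) (c : bool) (F : I -> V) :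
  (if c then \sum_(i <- r | P i) F i else 0) = \sum_(i <- r | P i) (if c then F i else 0).
Proof. by case: c => //; rewrite big1. Qed.

Lemma stepD k v y x L :
  \sum_(n < L.+1) F1 k v y x n (L - n)%N =
  psum L (fun zs => if last x zs == y then
     (\sum_(n < L.+1) nu (nu (v x) (take n (gam x zs))) (drop n (gam x zs))
        *~ ksign ((n%:Z - 1) * (L - n)%N%:Z)) *~ ksign (phi (k - (ind x)%:Z) x zs)
     else 0).
Proof.
symmetry.
transitivity (psum L (fun zs => \sum_(n < L.+1) (if last x zs == y then
     nu (nu (v x) (take n (gam x zs))) (drop n (gam x zs))
        *~ ksign ((n%:Z - 1) * (L - n)%N%:Z) *~ ksign (phi (k - (ind x)%:Z) x zs)
     else 0))).
  by apply: psum_eq => zs _; rewrite mulrz_suml if_sum.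
rewrite psum_sum; apply: eq_bigr => n _.
have hn : (n <= L)%N by rewrite -ltnS.
rewrite (psum_split _ hn) /F1; apply: psum_eq => u Hu; apply: psum_eq => w Hw.
rewrite last_cat gam_cat take_size_cat ?size_gam // drop_size_cat ?size_gam //.
case: ifP => // _.
rewrite nuz -mulrzA; congr (_ *~ _).
rewrite -ksignD; congr ksign.
rewrite phi_cat.
rewrite (_ : k - 1 - (ind (last x u))%:Z = (k - (ind x)%:Z + ((ind x)%:Z - (ind (last x u))%:Z - (size u)%:Z)) + ((size u)%:Z - 1)); last by ring.
rewrite (phi_shift (k - (ind x)%:Z + ((ind x)%:Z - (ind (last x u))%:Z - (size u)%:Z))) Hu Hw; ring.
Qed.

Hypothesis modrel : ainf_mod_rel hA hC nu (mu_of d pr).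

Definition Rm k (v : Crit -> A) x zs r s : A :=
  nu (v x) (take r.-1 (gam x zs) ++ mu_of d pr (take s (drop r.-1 (gam x zs))) ::
      drop (r.-1 + s) (gam x zs))
   *~ (ksign (Posz (r + s * ((size (gam x zs)).+1 - r - s))%N) *
       ksign ((Posz s - 2) * ((k - (ind x)%:Z) + \sum_(q <- take r.-1 (qsp x zs)) q))).

Lemma mu_big (l : seq C) : (3 <= size l)%N -> mu_of d pr l = 0.
Proof. by case: l => [|a [|b [|c l]]]. Qed.

Lemma stepE k v x zs L : hA (k - (ind x)%:Z) (v x) -> size zs = L ->
  \sum_(n < L.+1) nu (nu (v x) (take n (gam x zs))) (drop n (gam x zs))
        *~ ksign ((n%:Z - 1) * (L - n)%N%:Z) =
  - (\sum_(i < L) Rm k v x zs i.+1 1%N + \sum_(i < L) (if (i.+2 <= L)%N then Rm k v x zs i.+1 2%N else 0)).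
Proof.
move=> hv Hs.
have MR := modrel hv (hom_gam x zs); move: MR => /= /eqP; rewrite addr_eq0 => /eqP MR.
rewrite -second_split; last first.
  move=> r s h1 h3 h2; rewrite /Rm mu_big ?mul0rz.
    by rewrite nu_0in ?mul0rz // mem_cat mem_head orbT.
  rewrite size_take size_drop size_gam Hs.
  case: ifP => _; lia.
rewrite size_gam Hs in MR.
rewrite /Rm size_gam Hs -MR.
rewrite [RHS]big_mkcond [RHS]big_ord_recl /= add0r; apply: eq_bigr => i _.
rewrite /bump /= add1n; congr (_ *~ _).
apply/esym; apply: (ksign_even (t := (L - i)%N%:Z)).
rewrite subSS PoszM intS; ring.
Qed.

Lemma psumN n (F : seq Crit -> A) : psum n (fun ys => - F ys) = - psum n F.
Proof. by rewrite (psum_morph (f := fun a => - a)) ?oppr0 // => a b; rewrite opprD. Qed.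

Hypothesis tw2 : forall x y, d (m x y) =
     \sum_(z : Crit) pr (m x z) (m z y) *~ ksign ((ind x)%:Z - (ind z)%:Z).
Hypothesis prD : biadditive_fun pr.

Section Fixed.
Variables (k : int) (v : Crit -> A) (y x : Crit).

Definition M1 L := psum L (fun zs => if last x zs == y then
  (\sum_(i < L) Rm k v x zs i.+1 1%N) *~ ksign (phi (k - (ind x)%:Z) x zs) else 0).
Definition M2 L := psum L (fun zs => if last x zs == y then
  (\sum_(i < L) (if (i.+2 <= L)%N then Rm k v x zs i.+1 2%N else 0))
     *~ ksign (phi (k - (ind x)%:Z) x zs) else 0).
Definition Psi (i : nat) u z w1 w' := if last w1 w' == y then
  nu (v x) (gam x u ++ pr (m (last x u) z) (m z w1) :: gam w1 w')
    *~ ksign (Posz i.+1 + phi (k - (ind x)%:Z) x (u ++ z :: w1 :: w')) else 0.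
Definition Q L := \sum_(i < L) psum i (fun u => \sum_(z : Crit) \sum_(w1 : Crit)
   psum (L - i.+1)%N (fun w' => Psi i u z w1 w')).

Lemma combine L : hA (k - (ind x)%:Z) (v x) ->
  \sum_(n < L.+1) F1 k v y x n (L - n)%N = - (M1 L + M2 L).
Proof.
move=> hv; rewrite stepD /M1 /M2 -psumD -psumN; apply: psum_eq => zs Hs.
rewrite (stepE hv Hs); case: ifP => _; last by rewrite addr0 oppr0.
by rewrite mulNrz mulrzDl.
Qed.

Lemma M2_0 : M2 0 = 0.
Proof. by rewrite /M2 /= big_ord0 mul0rz; case: ifP. Qed.

Lemma M2_S L : M2 L.+1 = Q L.
Proof.
transitivity (\sum_(i < L) psum L.+1 (fun zs => if last x zs == y then
   Rm k v x zs i.+1 2%N *~ ksign (phi (k - (ind x)%:Z) x zs) else 0)).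
  rewrite -psum_sum /M2; apply: psum_eq => zs _.
  case: (last x zs == y); last by rewrite big1.
  rewrite big_ord_recr /= ltnn addr0 mulrz_suml; apply: eq_bigr => i _.
  by rewrite ltnS (ltn_ord i).
apply: eq_bigr => i _.
have hi : (i <= L.+1)%N by apply: leq_trans (ltnW (ltn_ord i)) _.
rewrite (psum_split _ hi); apply: psum_eq => u Hu.
rewrite (_ : (L.+1 - i)%N = (L - i.+1).+2); last by have := ltn_ord i; lia.
rewrite psumS; apply: eq_bigr => z _; rewrite psumS; apply: eq_bigr => w1 _.
apply: psum_eq => w' Hw.
rewrite /Psi last_cat /=; case: ifP => // _.
rewrite /Rm gam_cat /= take_size_cat ?size_gam //.
rewrite addnC -drop_drop !drop_size_cat ?size_gam //= -mulrzA; congr (_ *~ _).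
  by rewrite take0 drop0.
by rewrite (_ : (Posz 2 - 2) = 0) // mul0r (_ : ksign 0 = 1) // mulr1 ksign_2n ksignD.
Qed.

Lemma M1_point L i u w1 w' : size u = i -> size w' = (L - i.+1)%N -> (i < L)%N ->
  (if last x (u ++ w1 :: w') == y then Rm k v x (u ++ w1 :: w') i.+1 1%N
      *~ ksign (phi (k - (ind x)%:Z) x (u ++ w1 :: w')) else 0) =
  \sum_(z : Crit) - Psi i u z w1 w'.
Proof.
move=> Hu Hw hi.
rewrite /Psi last_cat /=; case: ifP => _; last by rewrite big1 // => z _; rewrite oppr0.
rewrite /Rm gam_cat /= take_size_cat ?size_gam // drop_size_cat ?size_gam //= take0.
rewrite addn1 -addn1 addnC -drop_drop drop_size_cat ?size_gam //= drop0.
rewrite tw2.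
rewrite (addf_sum (f := fun c => nu (v x) (gam x u ++ c :: gam w1 w'))); last first.
  by move=> a b; rewrite nu_entryD.
rewrite !mulrz_suml; apply: eq_bigr => z _.
rewrite (addfz (f := fun c => nu (v x) (gam x u ++ c :: gam w1 w'))); last first.
  by move=> a b; rewrite nu_entryD.
rewrite -!mulrzA -mulrNz; congr (_ *~ _).
rewrite qsp_cat take_size_cat ?size_qsp // sum_qsp.
rewrite size_cat /= !size_gam Hu Hw.
rewrite ksign_opp -!ksignD !phi_cat /= Hu.
set l := last x u.
set e := k - (ind x)%:Z + ((ind x)%:Z - (ind l)%:Z - i%:Z).
rewrite (_ : e + ((ind l)%:Z - (ind z)%:Z - 1) + ((ind z)%:Z - (ind w1)%:Z - 1) =
   e + ((ind l)%:Z - (ind w1)%:Z - 1) + (-1)); last by ring.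
rewrite (phi_shift (e + ((ind l)%:Z - (ind w1)%:Z - 1)) (-1)) Hw.
apply: (ksign_even (t := L%:Z - e - i%:Z - 1)).
rewrite /e; lia.
Qed.

Lemma M1_Q L : M1 L = - Q L.
Proof.
rewrite /M1 /Q -sumrN.
transitivity (\sum_(i < L) psum L (fun zs => if last x zs == y then
   Rm k v x zs i.+1 1%N *~ ksign (phi (k - (ind x)%:Z) x zs) else 0)).
  by rewrite -psum_sum; apply: psum_eq => zs _; rewrite mulrz_suml if_sum.
apply: eq_bigr => i _.
have hi : (i <= L)%N by apply: ltnW.
rewrite (psum_split _ hi) -psumN; apply: psum_eq => u Hu.
rewrite (_ : (L - i)%N = (L - i.+1).+1); last by have := ltn_ord i; lia.
rewrite psumS -sumrN.
under [RHS]eq_bigr => z _ do rewrite -sumrN.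
rewrite [RHS]exchange_big; apply: eq_bigr => w1 _.
transitivity (psum (L - i.+1) (fun w' => \sum_(z : Crit) - Psi i u z w1 w')).
  by apply: psum_eq => w' Hw; apply: (@M1_point L i u w1 w' Hu Hw (ltn_ord i)).
by rewrite psum_sum; apply: eq_bigr => z _; rewrite psumN.
Qed.

Lemma pr0l c : pr 0 c = 0.
Proof. by apply: (addf0 (f := fun a => pr a c)) => a b; case: prD => h _; apply: h. Qed.
Lemma pr0r c : pr c 0 = 0.
Proof. by apply: (addf0 (f := fun a => pr c a)) => a b; case: prD => _ h; apply: h. Qed.

Lemma Q_K K : (#|Crit| <= K)%N -> Q K = 0.
Proof.
move=> hK; rewrite /Q big1 // => i _.
rewrite -[RHS](@psum0 Crit A i); apply: psum_eq => u Hu.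
rewrite big1 // => z _; rewrite big1 // => w1 _.
rewrite -[RHS](@psum0 Crit A (K - i.+1)); apply: psum_eq => w' Hw.
rewrite /Psi; case: ifP => // _.
have : ~~ decr x (u ++ z :: w1 :: w').
  apply/negP => /decr_size h; have := leq_trans h hK.
  rewrite size_cat /= Hu Hw.
  by have := ltn_ord i; lia.
rewrite /decr cat_path /= negb_and => /orP [h|].
  by rewrite nu_0in ?mul0rz // mem_cat (gam_0 h).
rewrite negb_and => /orP [h|].
  by rewrite m0 // pr0l nu_0in ?mul0rz // mem_cat mem_head orbT.
rewrite negb_and => /orP [h|h].
  by rewrite (m0 h) pr0r nu_0in ?mul0rz // mem_cat mem_head orbT.
rewrite nu_0in ?mul0rz // mem_cat in_cons.
by have := gam_0 h; rewrite /decr => ->; rewrite !orbT.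
Qed.

End Fixed.

End Main.




Unset Implicit Arguments.
Set Strict Implicit.

Theorem proposition4p8
  (C A : zmodType) (hC : int -> C -> Prop) (hA : int -> A -> Prop)
  (d : C -> C) (pr : C -> C -> C)
  (Crit : finType) (ind : Crit -> nat) (m : Crit -> Crit -> C)
  (nu : A -> seq C -> A) :
  (* C = C_*(Omega X): nonnegatively graded, A_oo with mu_1 = d, mu_2 = pr, mu_i = 0 (i >= 3) *)
  is_grading hC -> nonneg_grading hC ->
  additive_fun d -> biadditive_fun pr ->
  (forall k c, hC k c -> hC (k - 1) (d c)) ->
  (forall k l c c', hC k c -> hC l c' -> hC (k + l) (pr c c')) ->
  ainf_alg_rel hC (mu_of d pr) ->
  (* twisting cocycle *)
  twisting_cocycle ind hC d pr m ->
  (* A_oo-module over C_*(Omega X) *)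
  is_grading hA -> multiadditive nu -> nu_graded hA hC nu ->
  ainf_mod_rel hA hC nu (mu_of d pr) ->
  (* conclusion: partial has degree -1 and partial^2 = 0 *)
  forall (Nb : nat), (#|Crit| <= Nb)%N ->
  forall (k : int) (v : Crit -> A), (forall x, hA (k - (ind x)%:Z) (v x)) ->
    (forall y, hA (k - 1 - (ind y)%:Z) (twisted_diff ind m nu Nb k v y)) /\
    (forall y, twisted_diff ind m nu Nb (k - 1) (twisted_diff ind m nu Nb k v) y = 0).
Proof.
move=> hCg hCnn dD prD hd hpr alg [tw1 tw2] hAg [nuA nuE] nug modrel Nb hNb k v hv.
split=> y; first exact: (td_deg tw1 hAg nug).
rewrite dd_expand //.
apply: big1 => x _.
rewrite (dd_tri hCnn tw1 nuA nuE _ _ _ _ hNb).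
rewrite (eq_bigr _ (fun (L : 'I_#|Crit|.+1) _ => combine tw1 nuA nuE modrel y L (hv x))).
rewrite sumrN big_split /= big_ord_recr /= [X in _ + X]big_ord_recl /=.
rewrite M2_0 add0r (M1_Q nuE tw2) (Q_K hCnn tw1 nuE prD) // oppr0 addr0.
rewrite (eq_bigr _ (fun (L : 'I_#|Crit|) _ => M1_Q nuE tw2 k v y x L)).
rewrite (eq_bigr _ (fun (L : 'I_#|Crit|) _ => M2_S d pr ind m nu k v y x L)).
by rewrite sumrN addNr oppr0.
Qed.
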